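(* Let $I$ be a finite set, and let $Y=(Y_i)_{i\in I}$ and $Y'=(Y'_i)_{i\in I}$ be two independent vectors of independent random variables all having a common distribution. For $S\subseteq I$ let $Y^S_i=Y'_i$ if $i\in S$ and $Y^S_i=Y_i$ otherwise. Let $f:\mathbb{R}^I\to\mathbb{R}$ satisfy $\mathbb{E}[f(Y)^2]<\infty$, and let $\mathscr{S},\tilde{\mathscr{S}}$ be random subsets of $I$, independent of $(Y,Y')$, with $\mathscr{S}\subseteq\tilde{\mathscr{S}}$ almost surely. Then \[ \operatorname{Cov}\big(f(Y),f(Y^{\mathscr{S}})\big)\ge\operatorname{Cov}\big(f(Y),f(Y^{\tilde{\mathscr{S}}})\big). \] *)

(* Defs.v *)
From HB Require Import structures.
From mathcomp Require Import all_boot all_order all_algebra.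
From mathcomp Require Import all_classical all_reals all_analysis.
Set Implicit Arguments. Unset Strict Implicit. Unset Printing Implicit Defensive.
Import Order.TTheory GRing.Theory Num.Theory.
Local Open Scope classical_set_scope.
Local Open Scope ring_scope.

Definition cylinders (I : finType) (R : realType) : set (set (I -> R)) :=
  [set C | exists i : I, exists2 B : set R, measurable B & C = [set x | B (x i)]].

Definition borel_fun (I : finType) (R : realType) (f : (I -> R) -> R) : Prop :=
  forall B : set R, measurable B ->
    smallest (sigma_algebra setT) (@cylinders I R) (f @^-1` B).

Definition resample (I : finType) (Omega R : Type)
  (Y Y' : I -> Omega -> R) (S : {set I}) (w : Omega) : I -> R :=
  fun i => if i \in S then Y' i w else Y i w.

Definition vec (I : finType) (Omega R : Type) (Y : I -> Omega -> R)
  (w : Omega) : I -> R := fun i => Y i w.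

(* Mutual independence of a finite family of sub-collections of events:
   for every choice of one event per index, the probability of the
   intersection is the product of the probabilities (subfamilies are covered
   since every collection below contains the sure event). *)
Definition mutual_indep (d : measure_display) (Omega : measurableType d)
  (R : realType) (P : probability Omega R) (K : finType)
  (E : K -> set (set Omega)) : Prop :=
  forall A : K -> set Omega, (forall k, E k (A k)) ->
    P (\bigcap_(k in [set: K]) A k) = (\prod_(k : K) P (A k))%E.

(* Index set for the joint family: Some (inl i) = Y_i, Some (inr i) = Y'_i,
   None = the pair of random sets (S, S~). *)
Definition lemma6p1_events (d : measure_display) (Omega : measurableType d)
  (R : realType) (I : finType) (Y Y' : I -> Omega -> R)
  (S S2 : Omega -> {set I}) (k : option (I + I)) : set (set Omega) :=
  match k with
  | Some (inl i) => [set Y i @^-1` B | B in [set B : set R | measurable B]]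
  | Some (inr i) => [set Y' i @^-1` B | B in [set B : set R | measurable B]]
  | None => [set [set w | (S w, S2 w) \in Q] | Q in [set: {set ({set I} * {set I})}]]
  end.

(* Main.v *)
Require Import Defs.
From HB Require Import structures.
From mathcomp Require Import all_boot all_order all_algebra.
From mathcomp Require Import all_classical all_reals all_analysis.
Set Implicit Arguments. Unset Strict Implicit. Unset Printing Implicit Defensive.
Import Order.TTheory GRing.Theory Num.Theory.
Import numFieldNormedType.Exports.
Local Open Scope classical_set_scope.
Local Open Scope ring_scope.
From mathcomp Require Import measurable_realfun.
From mathcomp Require Import lra.
From mathcomp Require Import ring.


Section Boxes.
Context (R : realType) (K : finType).

Definition boxes : set (set (K -> R)) :=
  [set X | exists B : K -> set R, (forall k, measurable (B k)) /\
     X = [set x | forall k, B k (x k)]].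
Definition vT := g_sigma_algebraType boxes.

Lemma boxes_setT : boxes setT.
Proof. exists (fun _ => setT); split => //; apply/seteqP; split => x //=. Qed.

Lemma boxes_setI : setI_closed boxes.
Proof.
move=> _ _ [B [mB ->]] [C [mC ->]]; exists (fun k => B k `&` C k); split.
  by move=> k; apply: measurableI.
apply/seteqP; split => x /=; first by move=> [h1 h2] k; split.
by move=> h; split => k; case: (h k).
Qed.

Lemma box_meas (B : K -> set R) : (forall k, measurable (B k)) ->
  measurable ([set x | forall k, B k (x k)] : set vT).
Proof. by move=> mB; apply: sub_sigma_algebra; exists B; split. Qed.

Lemma mcoord k : measurable_fun setT (fun z : vT => z k).
Proof.
move=> _ B mB; rewrite setTI.
have -> : (fun z : vT => z k) @^-1` B =
    [set x : vT | forall j, (if j == k then B else setT) (x j)].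
  apply/seteqP; split => x /=.
    by move=> Bx j; case: (j =P k) => [->|].
  by move=> /(_ k); rewrite eqxx.
have := @box_meas (fun j => if j == k then B else setT). by apply => j; case: eqP.
Qed.

Lemma vT_mfun d (T : measurableType d) (F : T -> vT) :
  (forall k, measurable_fun setT (fun t => F t k)) -> measurable_fun setT F.
Proof.
move=> mF; apply: (@measurability _ _ T vT setT F boxes erefl).
move=> _ [_ [B [mB ->]] <-].
have -> : setT `&` F @^-1` [set x | forall k, B k (x k)] =
    \bigcap_(k in setT) (setT `&` (fun t => F t k) @^-1` B k).
  apply/seteqP; split => x /=; first by move=> [_ h] k _; split.
  by move=> h; split => // k; case: (h k I).
apply: fin_bigcap_measurable; first exact: finite_finset.
by move=> k _; apply: mF.
Qed.


Definition G2 : set (set (vT * vT)) := [set A `*` B | A in boxes & B in boxes].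

Lemma G2_meas : G2 `<=` @measurable _ (vT * vT)%type.
Proof.
move=> _ [A [b [mb ->]] [B [b' [mb' ->]]] <-].
by apply: measurableX; apply: box_meas.
Qed.

Lemma G2_setI : setI_closed G2.
Proof.
move=> _ _ [A bA [B bB <-]] [A' bA' [B' bB' <-]].
rewrite -setXI; exists (A `&` A'); first exact: boxes_setI.
by exists (B `&` B') => //; exact: boxes_setI.
Qed.

Lemma G2T : G2 setT.
Proof. by exists setT; first exact: boxes_setT; exists setT; [exact: boxes_setT|rewrite setXTT]. Qed.

Lemma prod_gen : @measurable _ (vT * vT)%type = <<s G2 >>.
Proof.
rewrite measurable_prod_measurableType eqEsubset; split.
- apply: smallest_sub; first exact: smallest_sigma_algebra.
  move=> _ [A mA [B mB <-]].
  pose T2 := g_sigma_algebraType G2.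
  have mfst : measurable_fun setT (fst : T2 -> vT).
    apply: (@measurability _ _ T2 vT setT fst boxes erefl).
    move=> _ [b bb <-]; apply: sub_sigma_algebra; exists b => //.
    exists setT; first exact: boxes_setT.
    by rewrite setTI; apply/seteqP; split => -[x y] /=; tauto.
  have msnd : measurable_fun setT (snd : T2 -> vT).
    apply: (@measurability _ _ T2 vT setT snd boxes erefl).
    move=> _ [b bb <-]; apply: sub_sigma_algebra; exists setT.
      exact: boxes_setT.
    exists b => //.
  have := @measurableI _ T2 _ _ (mfst measurableT A mA) (msnd measurableT B mB).
  suff -> : A `*` B = (setT `&` fst @^-1` A) `&` (setT `&` snd @^-1` B) by [].
  by rewrite !setTI; apply/seteqP; split => -[x y] /=; tauto.
- apply: smallest_sub; first exact: smallest_sigma_algebra.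
  move=> _ [A bA [B bB <-]]; apply: sub_sigma_algebra.
  exists A; first exact: sub_sigma_algebra.
  by exists B => //; exact: sub_sigma_algebra.
Qed.

End Boxes.

Section Cyl.
Context (R : realType) (I : finType).
Definition vI := g_sigma_algebraType (@cylinders I R).

Lemma borel_mfun (f : (I -> R) -> R) : borel_fun f ->
  measurable_fun setT (f : vI -> R).
Proof. by move=> mf _ B mB; rewrite setTI; exact: mf. Qed.

Lemma vI_mfun d (T : measurableType d) (F : T -> vI) :
  (forall i, measurable_fun setT (fun t => F t i)) -> measurable_fun setT F.
Proof.
move=> mF; apply: (@measurability _ _ T vI setT F (@cylinders I R) erefl).
move=> _ [_ [i [B mB ->]] <-].
exact: (mF i measurableT B mB).
Qed.
End Cyl.


Definition mkmf d1 d2 (T1 : measurableType d1) (T2 : measurableType d2)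
  (f : T1 -> T2) (mf : measurable_fun setT f) : {mfun T1 >-> T2} :=
  HB.pack f (isMeasurableFun.Build _ _ _ _ f mf).

Lemma meas_cst_set (R : realType) (b : Prop) : measurable ([set _ : R | b]).
Proof.
case: (pselect b) => h.
  by rewrite (_ : [set _ | b] = setT) //; apply/seteqP; split.
by rewrite (_ : [set _ | b] = set0) //; apply/seteqP; split.
Qed.

Section Main.
Context (d : measure_display) (Omega : measurableType d)
  (R : realType) (P : probability Omega R) (I : finType)
  (Y Y' : I -> Omega -> R) (S S2 : Omega -> {set I}).
Hypotheses (mY : forall i, measurable_fun setT (Y i))
  (mY' : forall i, measurable_fun setT (Y' i))
  (mS : forall A : {set I}, measurable (S @^-1` [set A]))
  (mS2 : forall A : {set I}, measurable (S2 @^-1` [set A]))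
  (indep : mutual_indep P (lemma6p1_events Y Y' S S2))
  (same_law : forall (i j : I) (B : set R), measurable B ->
     P (Y i @^-1` B) = P (Y j @^-1` B) /\ P (Y' i @^-1` B) = P (Y j @^-1` B)).

Local Notation K := (option (I + I)).
Local Notation V := (vT R K).

Definition QT := {set ({set I} * {set I})}.
Definition Ev (Q : QT) : set Omega := [set w | (S w, S2 w) \in Q].

Lemma Ev_meas Q : measurable (Ev Q).
Proof.
have -> : Ev Q = \bigcup_(p in [set p | p \in Q])
    (S @^-1` [set p.1] `&` S2 @^-1` [set p.2]).
  apply/seteqP; split => w /=.
    by rewrite /Ev => h; exists (S w, S2 w).
  by move=> [[A B] /= hQ [/= h1 h2]]; rewrite /Ev /= h1 h2.
apply: fin_bigcup_measurable; first exact: finite_finset.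
by move=> p _; apply: measurableI.
Qed.

Definition Zv (Q : QT) (w : Omega) : V := fun k =>
  match k with
  | None => \1_(Ev Q) w
  | Some (inl i) => Y i w
  | Some (inr i) => Y' i w
  end.

Lemma mZk Q k : measurable_fun setT (fun w => Zv Q w k).
Proof.
case: k => [[i|i]|] /=; [exact: mY|exact: mY'|].
exact: measurable_realfun.measurable_indic (Ev_meas Q).
Qed.

Lemma mZ Q : measurable_fun setT (Zv Q).
Proof. by apply: vT_mfun => k; exact: mZk. Qed.

Lemma indEv Q w : \1_(Ev Q) w = ((S w, S2 w) \in Q)%:R :> R.
Proof.
rewrite indicE; case: (boolP ((S w, S2 w) \in Q)) => h.
  by rewrite mem_set.
by rewrite memNset // /Ev /= (negbTE h).
Qed.

Definition pk Q k (C : set R) := P ((fun w => Zv Q w k) @^-1` C).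

Lemma prodZ Q (C : K -> set R) : (forall k, measurable (C k)) ->
  P [set w | forall k, C k (Zv Q w k)] = (\prod_(k : K) pk Q k (C k))%E.
Proof.
move=> mC.
rewrite /pk -indep.
  congr (P _); apply/seteqP; split => w /=.
    by move=> h k _; exact: h.
  by move=> h k; apply: h.
case=> [[i|i]|] /=.
- by exists (C (Some (inl i))).
- by exists (C (Some (inr i))).
exists (finset (fun p => `[< C None (p \in Q)%:R >])) => //.
apply/seteqP; split => w /=; rewrite indEv inE asboolE //.
Qed.


Lemma pkT Q k : pk Q k setT = 1%E.
Proof. by rewrite /pk preimage_setT probability_setT. Qed.

Lemma pk0 Q k : pk Q k set0 = 0%E.
Proof. by rewrite /pk preimage_set0 measure0. Qed.

Lemma pk_cstI Q k (b : Prop) (D : set R) :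
  pk Q k ([set _ | b] `&` D) = (pk Q k [set _ | b] * pk Q k D)%E.
Proof.
case: (pselect b) => h.
  rewrite (_ : [set _ | b] = setT); last by apply/seteqP; split.
  by rewrite setTI pkT mul1e.
rewrite (_ : [set _ | b] = set0); last by apply/seteqP; split.
by rewrite set0I pk0 mul0e.
Qed.

Lemma pk_Icst Q k (b : Prop) (D : set R) :
  pk Q k (D `&` [set _ | b]) = (pk Q k D * pk Q k [set _ | b])%E.
Proof. by rewrite setIC pk_cstI muleC. Qed.

Definition mask (p : pred K) (z : V) : V := fun k => if p k then z k else 0.
Definition Cm (p : pred K) (B : K -> set R) k : set R :=
  fun r => if p k then B k r else B k 0.

Lemma Cm_meas p B : (forall k, measurable (B k)) -> forall k, measurable (Cm p B k).
Proof.
move=> mB k; rewrite /Cm; case: (p k); first exact: mB.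
exact: meas_cst_set.
Qed.

Lemma mmask Q p : measurable_fun setT (fun w => mask p (Zv Q w)).
Proof.
apply: vT_mfun => k; rewrite /mask; case: (p k); first exact: mZk.
exact: measurable_cst.
Qed.

Lemma box_mask Q p (B : K -> set R) :
  [set w | forall k, B k (mask p (Zv Q w) k)] = [set w | forall k, Cm p B k (Zv Q w k)].
Proof.
by apply/seteqP; split => w /= h k; have := h k; rewrite /mask /Cm; case: (p k).
Qed.

Lemma Pmask Q p (B : K -> set R) : (forall k, measurable (B k)) ->
  P [set w | forall k, B k (mask p (Zv Q w) k)] = (\prod_(k : K) pk Q k (Cm p B k))%E.
Proof. by move=> mB; rewrite box_mask prodZ //; exact: Cm_meas. Qed.

Lemma Pmask2 Q p q (B B' : K -> set R) : (forall k, ~~ (p k && q k)) ->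
  (forall k, measurable (B k)) -> (forall k, measurable (B' k)) ->
  P ([set w | forall k, B k (mask p (Zv Q w) k)] `&`
     [set w | forall k, B' k (mask q (Zv Q w) k)]) =
  (P [set w | forall k, B k (mask p (Zv Q w) k)] *
   P [set w | forall k, B' k (mask q (Zv Q w) k)])%E.
Proof.
move=> disj mB mB'; rewrite !Pmask // -big_split /=.
rewrite box_mask box_mask.
have -> : [set w | forall k, Cm p B k (Zv Q w k)] `&` [set w | forall k, Cm q B' k (Zv Q w k)]
   = [set w | forall k, (Cm p B k `&` Cm q B' k) (Zv Q w k)].
  apply/seteqP; split => w /=; first by move=> [h1 h2] k; split.
  by move=> h; split => k; case: (h k).
rewrite (@prodZ Q (fun k => Cm p B k `&` Cm q B' k)); last by move=> k; apply: measurableI; exact: Cm_meas.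
apply: eq_bigr => k _.
have := disj k; rewrite /Cm; case: (p k); case: (q k) => //= _.
- by rewrite pk_Icst.
- by rewrite pk_cstI.
- by rewrite pk_cstI.
Qed.


Definition lawm Q p := distribution P (mkmf (mmask Q p)).
Definition mpair Q p q := measurable_fun_pair (mmask Q p) (mmask Q q).
Definition law12 Q p q := distribution P (mkmf (mpair Q p q)).

Lemma law_prod Q p q : (forall k, ~~ (p k && q k)) ->
  forall X, measurable X -> law12 Q p q X = (lawm Q p \x lawm Q q)%E X.
Proof.
move=> disj X mX.
have mX' : <<s @G2 R K >> X by rewrite -prod_gen.
apply: (g_sigma_algebra_measure_unique (@G2 R K) (@G2_meas _ _) (fun _ => setT)) => //.
- by move=> _; exact: G2T.
- by apply/seteqP; split => // x _; exists 0%N.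
- exact: G2_setI.
- move=> _ [A [b [mb ->]] [B [b' [mb' ->]]] <-].
  rewrite [RHS](@product_measure1E _ _ _ _ R (lawm Q p) (lawm Q q)); [|exact: box_meas|exact: box_meas].
  rewrite /law12 /lawm /distribution /pushforward /=.
  rewrite -(Pmask2 Q disj mb mb').
  by congr (P _); apply/seteqP; split => w /=.
- by move=> k; apply: (le_lt_trans (probability_le1 (law12 Q p q) measurableT)); rewrite ltry.
Qed.

Lemma fub Q p q (disj : forall k, ~~ (p k && q k)) (Phi : V * V -> R)
  (mPhi : measurable_fun setT Phi)
  (iPhi : P.-integrable setT (fun w => (Phi (mask p (Zv Q w), mask q (Zv Q w)))%:E)) :
  (\int[P]_w (Phi (mask p (Zv Q w), mask q (Zv Q w)))%:E =
   \int[lawm Q p]_x \int[lawm Q q]_y (Phi (x, y))%:E)%E.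
Proof.
have e1 : (\int[law12 Q p q]_z (Phi z)%:E =
    \int[P]_w (Phi (mask p (Zv Q w), mask q (Zv Q w)))%:E)%E.
  rewrite /law12 /distribution (integral_pushforward (mpair Q p q)) //.
  exact/measurable_EFinP.
have e2 : (\int[law12 Q p q]_z (Phi z)%:E =
    \int[(lawm Q p \x lawm Q q)%E]_z (Phi z)%:E)%E.
  by apply: eq_measure_integral => A mA _; exact: law_prod.
have i1 : (law12 Q p q).-integrable setT (EFin \o Phi).
  rewrite /law12 /distribution; apply: (integrable_pushforward (mpair Q p q)) => //.
  - exact/measurable_EFinP.
have i2 : (lawm Q p \x lawm Q q)%E.-integrable setT (EFin \o Phi).
  apply/integrableP; split; first exact/measurable_EFinP.
  rewrite -(eq_measure_integral _ (fun A mA _ => law_prod Q disj mA)).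
  by move/integrableP : i1 => [].
by rewrite -e1 e2 -integral12_prod_meas1.
Qed.


Definition sig (D : {set I}) (k : K) : K :=
  match k with
  | Some (inl i) => if i \in D then Some (inr i) else Some (inl i)
  | Some (inr i) => if i \in D then Some (inl i) else Some (inr i)
  | None => None
  end.

Lemma sigK D : involutive (sig D).
Proof. by case=> [[i|i]|] //=; case: ifP => h /=; rewrite h. Qed.

Definition swap D (z : V) : V := fun k => z (sig D k).

Lemma mswapV D : measurable_fun setT (swap D : V -> V).
Proof. by apply: vT_mfun => k; exact: mcoord. Qed.

Lemma mswap Q D : measurable_fun setT (fun w => swap D (Zv Q w)).
Proof. by apply: vT_mfun => k; exact: mZk. Qed.

Lemma pk_sig Q D k C : measurable C -> pk Q (sig D k) C = pk Q k C.
Proof.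
move=> mC; case: k => [[i|i]|] //=; case: (i \in D) => //=; rewrite /pk /=.
- by have [_ ->] := same_law i i mC.
- by have [_ ->] := same_law i i mC.
Qed.

Definition lawZ Q := distribution P (mkmf (mZ Q)).
Definition lawS Q D := distribution P (mkmf (mswap Q D)).

Lemma swap_law Q D X : measurable X -> lawS Q D X = lawZ Q X.
Proof.
move=> mX.
apply: (@g_sigma_algebra_measure_unique _ R V (@boxes R K) _ (fun _ => setT)) => //.
- by move=> _ [b [mb ->]]; exact: box_meas.
- by move=> _; exact: boxes_setT.
- by apply/seteqP; split => // x _; exists 0%N.
- exact: boxes_setI.
- move=> _ [b [mb ->]].
  rewrite /lawS /lawZ /distribution /pushforward /=.
  rewrite /= /distribution /pushforward /=.
  have -> : (fun w => swap D (Zv Q w)) @^-1` [set x | forall k, b k (x k)] =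
     [set w | forall k, b (sig D k) (Zv Q w k)].
    apply/seteqP; split => w /= h k; first by have := h (sig D k); rewrite /swap sigK.
    by have := h (sig D k); rewrite sigK.
  rewrite (@prodZ Q (fun k => b (sig D k))) //.
  rewrite (@prodZ Q b) //.
  rewrite [RHS](reindex_inj (inv_inj (sigK D))) /=.
  by apply: eq_bigr => k _; rewrite pk_sig.
- by move=> k; apply: (le_lt_trans (probability_le1 (lawS Q D) measurableT)); rewrite ltry.
Qed.

Lemma swap_int_ge0 Q D (h : V -> \bar R) : measurable_fun setT h ->
  (forall z, (0 <= h z)%E) ->
  (\int[P]_w h (swap D (Zv Q w)) = \int[P]_w h (Zv Q w))%E.
Proof.
move=> mh h0.
have e1 : (\int[lawS Q D]_z h z = \int[P]_w h (swap D (Zv Q w)))%E.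
  by rewrite /lawS /distribution ge0_integral_pushforward.
have e2 : (\int[lawZ Q]_z h z = \int[P]_w h (Zv Q w))%E.
  by rewrite /lawZ /distribution ge0_integral_pushforward.
rewrite -e1 -e2; apply: eq_measure_integral => A mA _; exact: swap_law.
Qed.

Lemma swap_integrable Q D (h : V -> \bar R) : measurable_fun setT h ->
  P.-integrable setT (fun w => h (Zv Q w)) ->
  P.-integrable setT (fun w => h (swap D (Zv Q w))).
Proof.
move=> mh /integrableP [_ fin]; apply/integrableP; split.
  exact: (measurableT_comp mh (mswap Q D)).
rewrite (@swap_int_ge0 Q D (abse \o h)) //.
  exact: measurableT_comp.
by move=> z /=.
Qed.

Lemma swap_int Q D (h : V -> \bar R) : measurable_fun setT h ->
  P.-integrable setT (fun w => h (Zv Q w)) ->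
  (\int[P]_w h (swap D (Zv Q w)) = \int[P]_w h (Zv Q w))%E.
Proof.
move=> mh ih.
have e1 : (\int[lawS Q D]_z h z = \int[P]_w h (swap D (Zv Q w)))%E.
  rewrite /lawS /distribution integral_pushforward //.
  exact: swap_integrable.
have e2 : (\int[lawZ Q]_z h z = \int[P]_w h (Zv Q w))%E.
  by rewrite /lawZ /distribution integral_pushforward.
rewrite -e1 -e2; apply: eq_measure_integral => A mA _; exact: swap_law.
Qed.


Definition pA (A : {set I}) (k : K) : bool :=
  match k with Some (inl i) => i \in A | Some (inr i) => i \in A | None => false end.
Definition pl (A : {set I}) (k : K) : bool :=
  match k with Some (inl i) => i \in A | _ => false end.
Definition pr (A : {set I}) (k : K) : bool :=
  match k with Some (inr i) => i \in A | _ => false end.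
Definition mrg (p : pred K) (w u : V) : V := fun k => if p k then u k else w k.

Lemma pA_sig A k : pA A (sig A k) = pA A k.
Proof. by case: k => [[i|i]|] //=; case: ifP => h /=; rewrite h. Qed.

Lemma sig_out A k : ~~ pA A k -> sig A k = k.
Proof. by case: k => [[i|i]|] //= /negbTE ->. Qed.

Lemma pr_sig A k : pr A (sig A k) = pl A k.
Proof. by case: k => [[i|i]|] //=; case: ifP => h /=; rewrite ?h. Qed.

Lemma pA_split A k : pA A k = pl A k || pr A k.
Proof. by case: k => [[i|i]|] //=; rewrite orbF. Qed.

Lemma bint d' (T : measurableType d') (mu : probability T R) (g : T -> R) (M : R) :
  measurable_fun setT g -> (forall t, `|g t| <= M) -> mu.-integrable setT (EFin \o g).
Proof.
move=> mg bg.
apply: (@le_integrable _ _ _ mu setT measurableT (EFin \o g) (EFin \o cst M)).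
- exact/measurable_EFinP.
- by move=> t _ /=; rewrite lee_fin (le_trans (bg t) (ler_norm M)).
- exact: finite_measure_integrable_cst.
Qed.

Lemma mcoord1 k : measurable_fun setT (fun x : V * V => x.1 k).
Proof. exact: (measurableT_comp (mcoord k) measurable_fst). Qed.
Lemma mcoord2 k : measurable_fun setT (fun x : V * V => x.2 k).
Proof. exact: (measurableT_comp (mcoord k) measurable_snd). Qed.

Lemma mmrg p : measurable_fun setT (fun x : V * V => mrg p x.1 x.2).
Proof. by apply: vT_mfun => k; rewrite /mrg; case: (p k); [exact: mcoord2|exact: mcoord1]. Qed.

Lemma mmrgs p A : measurable_fun setT (fun x : V * V => mrg p x.1 (swap A x.2)).
Proof. by apply: vT_mfun => k; rewrite /mrg; case: (p k); [exact: mcoord2|exact: mcoord1]. Qed.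

Lemma mmrgx p (x : V) : measurable_fun setT (fun u : V => mrg p x u).
Proof. by apply: vT_mfun => k; rewrite /mrg; case: (p k); [exact: mcoord|exact: measurable_cst]. Qed.


Lemma condpos_b Q A (Psi : V -> R) (mPsi : measurable_fun setT Psi) (M : R)
  (bPsi : forall z, `|Psi z| <= M)
  (ign : forall z z', (forall k, ~~ pr A k -> z k = z' k) -> Psi z = Psi z') :
  (0 <= \int[P]_w (Psi (Zv Q w) * Psi (swap A (Zv Q w)))%:E)%E.
Proof.
have M0 : 0 <= M by apply: le_trans (bPsi 0); exact: normr_ge0.
have bPP : forall a b, `|Psi a * Psi b| <= M * M.
  by move=> a b; rewrite normrM; apply: ler_pM.
pose Phi (x : V * V) := Psi (mrg (pA A) x.1 x.2) * Psi (mrg (pA A) x.1 (swap A x.2)).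
have mPhi : measurable_fun setT Phi.
  by apply: measurable_funM; apply: (measurableT_comp mPsi); [exact: mmrg|exact: mmrgs].
have eP : forall w, Psi (Zv Q w) * Psi (swap A (Zv Q w)) =
    Phi (mask (predC (pA A)) (Zv Q w), mask (pA A) (Zv Q w)).
  move=> w; rewrite /Phi /=; congr (Psi _ * Psi _); apply/funext => k;
    rewrite /mrg /mask /swap /=.
  - by case: (pA A k).
  - rewrite pA_sig; case: (boolP (pA A k)) => h //=; by rewrite sig_out.
have disj1 : forall k, ~~ (predC (pA A) k && pA A k) by move=> k; rewrite /= andNb.
have i1 : P.-integrable setT
    (fun w => (Phi (mask (predC (pA A)) (Zv Q w), mask (pA A) (Zv Q w)))%:E).
  apply: (@bint _ _ P _ (M * M)) => //.
  exact: (measurableT_comp mPhi (mpair Q (predC (pA A)) (pA A))).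
  by move=> t; rewrite /Phi.
under eq_integral => w _ do rewrite eP.
rewrite (fub disj1 mPhi i1).
apply: integral_ge0 => x _.
pose kk (u : V) := Psi (mrg (pA A) x u).
have mkk : measurable_fun setT kk by exact: (measurableT_comp mPsi (mmrgx _ x)).
have mPx : measurable_fun setT (fun y : V => Phi (x, y)).
  apply: (measurableT_comp mPhi); apply: measurable_fun_pair => //; exact: measurable_cst.
have e3 : (\int[lawm Q (pA A)]_y (Phi (x, y))%:E =
           \int[P]_w (Phi (x, mask (pA A) (Zv Q w)))%:E)%E.
  rewrite /lawm /distribution integral_pushforward //.
  - exact/measurable_EFinP.
  - apply: (@bint _ _ P _ (M * M)) => //.
    exact: (measurableT_comp mPx (mmask Q (pA A))).
    by move=> t; rewrite /Phi.
pose Phi2 (y : V * V) := kk y.1 * kk (swap A y.2).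
have mPhi2 : measurable_fun setT Phi2.
  apply: measurable_funM; first exact: (measurableT_comp mkk measurable_fst).
  exact: (measurableT_comp mkk (measurableT_comp (mswapV A) measurable_snd)).
have e4 : (\int[P]_w (Phi (x, mask (pA A) (Zv Q w)))%:E =
           \int[P]_w (Phi2 (mask (pl A) (Zv Q w), mask (pr A) (Zv Q w)))%:E)%E.
  apply: eq_integral => w _; congr (_%:E); rewrite /Phi /Phi2 /kk /=.
  congr (_ * _); apply: ign => k hk; rewrite /mrg /mask /swap.
  - case hA: (pA A k) => //.
    have hl : pl A k by move: hA; rewrite pA_split (negbTE hk) orbF.
    by rewrite hl.
  - case hA: (pA A k) => //.
    have hl : pl A k by move: hA; rewrite pA_split (negbTE hk) orbF.
    by rewrite pA_sig hA pr_sig hl.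
have disj2 : forall k, ~~ (pl A k && pr A k) by case=> [[i|i]|] //=; rewrite andbF.
have i2 : P.-integrable setT
    (fun w => (Phi2 (mask (pl A) (Zv Q w), mask (pr A) (Zv Q w)))%:E).
  apply: (@bint _ _ P _ (M * M)) => //.
    exact: (measurableT_comp mPhi2 (mpair Q (pl A) (pr A))).
  by move=> t; rewrite /Phi2 /kk.
rewrite e3 e4 (fub disj2 mPhi2 i2).
pose c := (\int[lawm Q (pr A)]_u (kk (swap A u))%:E)%E.
have mks : measurable_fun setT (fun u => kk (swap A u)) by exact: (measurableT_comp mkk (mswapV A)).
have ic : (lawm Q (pr A)).-integrable setT (EFin \o (fun u => kk (swap A u))).
  apply: (@bint _ _ (lawm Q (pr A)) _ M) => //.
  by move=> t; rewrite /kk.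
have ik : forall Q' p', (lawm Q' p').-integrable setT (EFin \o kk).
  by move=> Q' p'; apply: (@bint _ _ (lawm Q' p') _ M) => // t; rewrite /kk.
have e6 : forall u1, (\int[lawm Q (pr A)]_u2 (Phi2 (u1, u2))%:E = (kk u1)%:E * c)%E.
  move=> u1; rewrite /Phi2 /=.
  under eq_integral do rewrite EFinM.
  by rewrite integralZl.
under eq_integral do rewrite e6.
have cfin : c \is a fin_num by exact: integrable_fin_num.
rewrite -(fineK cfin) integralZr //; last exact: ik.
have ec : c = (\int[lawm Q (pl A)]_u (kk u)%:E)%E.
  have ->: c = (\int[P]_w (kk (swap A (mask (pr A) (Zv Q w))))%:E)%E.
    rewrite /c /lawm /distribution integral_pushforward //.
    - exact/measurable_EFinP.
    - apply: (@bint _ _ P _ M) => //.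
        exact: (measurableT_comp mks (mmask Q (pr A))).
      by move=> t; rewrite /kk.
  have ->: (\int[P]_w (kk (swap A (mask (pr A) (Zv Q w))))%:E =
            \int[P]_w (kk (mask (pl A) (swap A (Zv Q w))))%:E)%E.
    apply: eq_integral => w _; congr ((kk _)%:E); apply/funext => k.
    by rewrite /swap /mask pr_sig.
  have mkm : measurable_fun setT (fun z => (kk (mask (pl A) z))%:E).
    apply/measurable_EFinP; apply: (measurableT_comp mkk).
    by apply: vT_mfun => k; rewrite /mask; case: (pl A k); [exact: mcoord|exact: measurable_cst].
  rewrite (@swap_int Q A (fun z => (kk (mask (pl A) z))%:E)) //; last first.
    apply: (@bint _ _ P _ M) => //; last by move=> t; rewrite /kk.
    exact: (measurableT_comp mkk (mmask Q (pl A))).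
  rewrite /lawm /distribution integral_pushforward //.
  - exact/measurable_EFinP.
  - apply: (@bint _ _ P _ M) => //; last by move=> t; rewrite /kk.
    exact: (measurableT_comp mkk (mmask Q (pl A))).
rewrite -ec -(fineK cfin) -EFinM lee_fin -expr2; exact: sqr_ge0.
Qed.


Definition cl (n : nat) (r : R) : R := Num.max (- n%:R) (Num.min r n%:R).

Lemma cl_prop n r : [/\ `|cl n r| <= n%:R, cl n r ^+ 2 <= r ^+ 2 &
   (`|r| <= n%:R -> cl n r = r)].
Proof.
have n0 : 0 <= n%:R :> R by [].
rewrite /cl; case: (leP r n%:R) => h1; case: (leP (- n%:R) _) => h2;
  split; rewrite ?ler_norml; try (apply/andP; split); try nra;
  move=> /andP[h3 h4]; lra.
Qed.

Lemma cl_id n r : `|r| <= n%:R -> cl n r = r.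
Proof. by case: (cl_prop n r). Qed.

Lemma sq_dom (x y : R) : `|x * y| <= x ^+ 2 + y ^+ 2.
Proof. rewrite ler_norml; apply/andP; split; nra. Qed.

Lemma mcl d' (T : measurableType d') n (g : T -> R) :
  measurable_fun setT g -> measurable_fun setT (fun t => cl n (g t)).
Proof.
move=> mg; rewrite /cl.
apply: measurable_maxr; first exact: measurable_cst.
by apply: measurable_minr => //; exact: measurable_cst.
Qed.

Lemma condpos Q A (Psi : V -> R) (mPsi : measurable_fun setT Psi)
  (ign : forall z z', (forall k, ~~ pr A k -> z k = z' k) -> Psi z = Psi z')
  (i2 : P.-integrable setT (fun w => (Psi (Zv Q w) ^+ 2)%:E)) :
  (0 <= \int[P]_w (Psi (Zv Q w) * Psi (swap A (Zv Q w)))%:E)%E.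
Proof.
pose f_ n w := (cl n (Psi (Zv Q w)) * cl n (Psi (swap A (Zv Q w))))%:E.
pose F w := (Psi (Zv Q w) * Psi (swap A (Zv Q w)))%:E.
pose g w := (Psi (Zv Q w) ^+ 2 + Psi (swap A (Zv Q w)) ^+ 2)%:E.
have mPZ : measurable_fun setT (fun w => Psi (Zv Q w)) := measurableT_comp mPsi (mZ Q).
have mPS : measurable_fun setT (fun w => Psi (swap A (Zv Q w))) :=
  measurableT_comp mPsi (mswap Q A).
have ig : P.-integrable setT g.
  have i2s : P.-integrable setT (fun w => (Psi (swap A (Zv Q w)) ^+ 2)%:E).
    apply: (@swap_integrable Q A (fun z => (Psi z ^+ 2)%:E)) => //.
    exact/measurable_EFinP/measurable_funX.
  rewrite /g; under eq_fun do rewrite EFinD.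
  exact: integrableD.
have mf_ : forall n, measurable_fun setT (f_ n).
  move=> n; apply/measurable_EFinP; apply: measurable_funM; exact: mcl.
have mF : measurable_fun setT F.
  by apply/measurable_EFinP; apply: measurable_funM.
have conv : \forall x \ae P, setT x -> f_ ^~ x @ \oo --> F x.
  apply: aeW => w _.
  set a := Psi (Zv Q w); set b := Psi (swap A (Zv Q w)).
  have [N hN] : exists N, forall n, (N <= n)%N -> `|a| <= n%:R /\ `|b| <= n%:R.
    exists (maxn (Num.Def.archi_bound `|a|) (Num.Def.archi_bound `|b|)) => n hn.
    split; (apply: le_trans; first exact/ltW/archi_boundP);
      rewrite ler_nat; apply: leq_trans hn; [exact: leq_maxl|exact: leq_maxr].
  apply: cvg_near_cst; near=> n.
  have /hN[ha hb] : (N <= n)%N by near: n; exact: nbhs_infty_ge.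
  by rewrite /f_ -/a -/b (cl_id ha) (cl_id hb).
have dom : \forall x \ae P, forall n, setT x -> (`|f_ n x| <= g x)%E.
  apply: aeW => w n _; rewrite /f_ /g abse_EFin lee_fin.
  apply: (le_trans (sq_dom _ _)); apply: lerD.
  - by case: (cl_prop n (Psi (Zv Q w))).
  - by case: (cl_prop n (Psi (swap A (Zv Q w)))).
have [_ _ h3] := @dominated_convergence _ _ _ P setT measurableT f_ F g mf_ mF conv ig dom.
rewrite -(cvg_lim (@ereal_hausdorff R) h3).
apply: lime_ge; first exact: (cvgP _ h3).
apply: nearW => n /=.
apply: (@condpos_b Q A (fun z => cl n (Psi z)) (mcl n mPsi) n%:R).
- by move=> z; case: (cl_prop n (Psi z)).
- by move=> z z' h; rewrite (ign z z' h).
Unshelve. all: by end_near.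
Qed.


Definition yv (z : V) : vI R I := fun i => z (Some (inl i)).

Lemma myv : measurable_fun setT yv.
Proof. by apply: vI_mfun => i; exact: mcoord. Qed.

Definition sd (X Z : {set I}) := (X :\: Z) :|: (Z :\: X).

Lemma sigsig X Z k : sig Z (sig X k) = sig (sd X Z) k.
Proof.
rewrite /sd; case: k => [[i|i]|] //=;
  case hX: (i \in X); case hZ: (i \in Z) => /=; rewrite ?hX ?hZ !inE ?hX ?hZ //.
Qed.

Lemma swap_swap X Z (z : V) : swap X (swap Z z) = swap (sd X Z) z.
Proof. by apply/funext => k; rewrite /swap sigsig. Qed.

Lemma prod_int (x y : Omega -> R) : measurable_fun setT x -> measurable_fun setT y ->
  P.-integrable setT (fun w => (x w ^+ 2)%:E) -> P.-integrable setT (fun w => (y w ^+ 2)%:E) ->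
  P.-integrable setT (EFin \o (fun w => x w * y w)).
Proof.
move=> mx my ix iy.
apply: (@le_integrable _ _ _ P setT measurableT _ (fun w => (x w ^+ 2 + y w ^+ 2)%:E)).
- by apply/measurable_EFinP; exact: measurable_funM.
- move=> w _ /=; rewrite ?abse_EFin lee_fin; apply: (le_trans (sq_dom _ _)).
  by rewrite ger0_norm // addr_ge0 // sqr_ge0.
- by under eq_fun do rewrite EFinD; exact: integrableD.
Qed.

Lemma mono Q (A B : {set I}) (f : (I -> R) -> R) (mf : borel_fun f)
  (AB : A \subset B)
  (f2 : P.-integrable setT (fun w => (f (yv (Zv Q w)) ^+ 2)%:E)) :
  (\int[P]_w (f (yv (Zv Q w)) * f (yv (swap B (Zv Q w))))%:E <=
   \int[P]_w (f (yv (Zv Q w)) * f (yv (swap A (Zv Q w))))%:E)%E.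
Proof.
have mF0 : measurable_fun setT (fun z : V => f (yv z)).
  exact: (measurableT_comp (borel_mfun mf) myv).
pose t X w := f (yv (swap X (Zv Q w))).
pose a w := f (yv (Zv Q w)).
have mt : forall X, measurable_fun setT (t X).
  by move=> X; exact: (measurableT_comp mF0 (mswap Q X)).
have ma : measurable_fun setT a by exact: (measurableT_comp mF0 (mZ Q)).
have it : forall X, P.-integrable setT (fun w => (t X w ^+ 2)%:E).
  move=> X; apply: (@swap_integrable Q X (fun z => (f (yv z) ^+ 2)%:E)) => //.
  exact/measurable_EFinP/measurable_funX.
set C := B :\: A.
have sdCB : sd C B = A.
  apply/setP => i; rewrite /sd /C !inE.
  by case hA: (i \in A); case hB: (i \in B) => //=; move/fintype.subsetP: AB => /(_ i); rewrite hA hB => /(_ isT).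
have sdCA : sd C A = B.
  apply/setP => i; rewrite /sd /C !inE.
  by case hA: (i \in A); case hB: (i \in B) => //=; move/fintype.subsetP: AB => /(_ i); rewrite hA hB => /(_ isT).
pose Psi (z : V) := f (yv z) - f (yv (swap C z)).
have mPsi : measurable_fun setT Psi.
  by apply: measurable_funB => //; exact: (measurableT_comp mF0 (mswapV C)).
have ign : forall z z', (forall k, ~~ pr A k -> z k = z' k) -> Psi z = Psi z'.
  move=> z z' h; rewrite /Psi; congr (f _ - f _); apply/funext => i; rewrite /yv /swap; apply: h => //=.
  rewrite /C; case: ifP => //=; rewrite !inE => /andP[hA _]; exact: hA.
have i2 : P.-integrable setT (fun w => (Psi (Zv Q w) ^+ 2)%:E).
  apply: (@le_integrable _ _ _ P setT measurableT _ (fun w => (2 * (a w ^+ 2 + t C w ^+ 2))%:E)).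
  - by apply/measurable_EFinP; apply: measurable_funX; exact: (measurableT_comp mPsi (mZ Q)).
  - move=> w _ /=; rewrite ?abse_EFin lee_fin /Psi.
    rewrite ger0_norm ?sqr_ge0 // ger0_norm; last by rewrite mulr_ge0 // addr_ge0 // sqr_ge0.
    rewrite /a /t /=; move: (f _) (f (yv (swap C _))) => x y; have := sqr_ge0 (x + y); nra.
  - under eq_fun do rewrite EFinM.
    apply: integrableZl => //.
    by under eq_fun do rewrite EFinD; exact: integrableD.
have pos := condpos mPsi ign i2.
have sdBC : sd B C = A by rewrite /sd finset.setUC -/(sd C B) sdCB.
have sdAC : sd A C = B by rewrite /sd finset.setUC -/(sd C A) sdCA.
have eP : forall w, Psi (Zv Q w) * Psi (swap A (Zv Q w)) =
    (a w * t A w - a w * t B w) - (t C w * t A w - t C w * t B w).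
  move=> w; rewrite /Psi swap_swap sdCA /a /t; ring.
have iad := prod_int ma (mt A) f2 (it A).
have iae := prod_int ma (mt B) f2 (it B).
have icd := prod_int (mt C) (mt A) (it C) (it A).
have ice := prod_int (mt C) (mt B) (it C) (it B).
have intB : forall x y : Omega -> R, P.-integrable setT (EFin \o x) ->
    P.-integrable setT (EFin \o y) -> P.-integrable setT (EFin \o (fun w => x w - y w)).
  move=> x y ix iy; apply: (eq_integrable measurableT _ _ _ (integrableB measurableT ix iy)).
  by move=> w _.
have I3 : (\int[P]_w (t C w * t A w)%:E = \int[P]_w (a w * t B w)%:E)%E.
  have := @swap_int Q C (fun z => (f (yv z) * f (yv (swap B z)))%:E).
  rewrite /t /a; move=> <- //.
  - by apply: eq_integral => w _; rewrite swap_swap sdBC.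
  - apply/measurable_EFinP; apply: measurable_funM => //.
    exact: (measurableT_comp mF0 (mswapV B)).
have I4 : (\int[P]_w (t C w * t B w)%:E = \int[P]_w (a w * t A w)%:E)%E.
  have := @swap_int Q C (fun z => (f (yv z) * f (yv (swap A z)))%:E).
  rewrite /t /a; move=> <- //.
  - by apply: eq_integral => w _; rewrite swap_swap sdAC.
  - apply/measurable_EFinP; apply: measurable_funM => //.
    exact: (measurableT_comp mF0 (mswapV A)).
have : (\int[P]_w (Psi (Zv Q w) * Psi (swap A (Zv Q w)))%:E =
    ((\int[P]_w (a w * t A w)%:E - \int[P]_w (a w * t B w)%:E) -
     (\int[P]_w (t C w * t A w)%:E - \int[P]_w (t C w * t B w)%:E)))%E.
  under eq_integral do rewrite eP.
  rewrite integralB_EFin //; [|exact: intB|exact: intB].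
  by rewrite !integralB_EFin.
rewrite I3 I4 => e; rewrite e in pos.
have f1 := integrable_fin_num measurableT iad.
have f2' := integrable_fin_num measurableT iae.
move: pos; rewrite -(fineK f1) -(fineK f2') -!EFinB lee_fin => pos.
by rewrite lee_fin; lra.
Qed.


Lemma cond Q (h : V -> R) (mh : measurable_fun setT h)
  (ignN : forall z z', (forall k, k != None -> z k = z' k) -> h z = h z')
  (ih : P.-integrable setT (EFin \o (fun w => h (Zv Q w)))) :
  (\int[P]_w (\1_(Ev Q) w * h (Zv Q w))%:E = P (Ev Q) * \int[P]_w (h (Zv Q w))%:E)%E.
Proof.
pose pN (k : K) := k == None.
pose pS (k : K) := k != None.
have disj : forall k, ~~ (pN k && pS k) by move=> k; rewrite /pN /pS andbN.
pose Phi (x : V * V) := x.1 None * h x.2.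
have mPhi : measurable_fun setT Phi.
  apply: measurable_funM; first exact: mcoord1.
  exact: (measurableT_comp mh measurable_snd).
have hS : forall w, h (mask pS (Zv Q w)) = h (Zv Q w).
  by move=> w; apply: ignN => k hk; rewrite /mask /pS hk.
have eP : forall w, \1_(Ev Q) w * h (Zv Q w) = Phi (mask pN (Zv Q w), mask pS (Zv Q w)).
  by move=> w; rewrite /Phi /= hS /mask /pN eqxx.
have mhZ : measurable_fun setT (fun w => h (Zv Q w)) := measurableT_comp mh (mZ Q).
have iP : P.-integrable setT (fun w => (Phi (mask pN (Zv Q w), mask pS (Zv Q w)))%:E).
  apply: (@le_integrable _ _ _ P setT measurableT _ (EFin \o (fun w => h (Zv Q w)))) => //.
  - apply/measurable_EFinP; exact: (measurableT_comp mPhi (mpair Q pN pS)).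
  - move=> w _; rewrite -eP /= ?abse_EFin lee_fin normrM indicE.
    by case: (w \in Ev Q); rewrite ?normr1 ?normr0 ?mul1r ?mul0r.
under eq_integral do rewrite eP.
rewrite (fub disj mPhi iP).
have ihS : (lawm Q pS).-integrable setT (EFin \o h).
  rewrite /lawm /distribution; apply: (integrable_pushforward (mmask Q pS)) => //.
  - exact/measurable_EFinP.
  - by apply: (eq_integrable measurableT _ _ _ ih) => w _ /=; rewrite hS.
pose c := (\int[lawm Q pS]_y (h y)%:E)%E.
have ec : c = (\int[P]_w (h (Zv Q w))%:E)%E.
  rewrite /c /lawm /distribution integral_pushforward //.
  - by apply: eq_integral => w _ /=; rewrite hS.
  - exact/measurable_EFinP.
  - by apply: (eq_integrable measurableT _ _ _ ih) => w _ /=; rewrite hS.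
have cfin : c \is a fin_num by exact: integrable_fin_num.
have e6 : forall x : V, (\int[lawm Q pS]_y (Phi (x, y))%:E = (x None)%:E * c)%E.
  move=> x; rewrite /Phi /=.
  under eq_integral do rewrite EFinM.
  by rewrite integralZl.
under eq_integral do rewrite e6.
have iN : (lawm Q pN).-integrable setT (fun x : V => (x None)%:E).
  rewrite /lawm /distribution; apply: (integrable_pushforward (mmask Q pN)) => //.
  - by apply/measurable_EFinP; exact: (@mcoord R K None).
  - apply: (eq_integrable measurableT (fun w => (\1_(Ev Q) w)%:E) _ _ (integrable_indic P (Ev_meas Q))).
    by move=> w _ /=; rewrite /mask /pN eqxx.
rewrite -(fineK cfin) integralZr // (fineK cfin) -ec.
apply: (congr1 (fun t => (t * c)%E)).
rewrite /lawm /distribution integral_pushforward //.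
- rewrite /= (_ : (fun w => _) = (fun w => (\1_(Ev Q) w)%:E)); last first.
    by apply/funext => w; rewrite /mask /pN eqxx.
  change (\int[P]_(w in [set: Omega]) (\1_(Ev Q) w)%:E = P (Ev Q))%E.
  by rewrite integral_indic ?setIT //; exact: Ev_meas.
- by apply/measurable_EFinP; exact: (@mcoord R K None).
- apply: (eq_integrable measurableT (fun w => (\1_(Ev Q) w)%:E) _ _ (integrable_indic P (Ev_meas Q))).
  by move=> w _ /=; rewrite /mask /pN eqxx.
Qed.


Lemma decomp (hs : {set I} * {set I} -> V -> R)
  (mh : forall p, measurable_fun setT (hs p))
  (ign : forall p z z', (forall k, k != None -> z k = z' k) -> hs p z = hs p z')
  (ih : forall p, P.-integrable setT (EFin \o (fun w => hs p (Zv finset.set0 w)))) :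
  P.-integrable setT (EFin \o (fun w => hs (S w, S2 w) (Zv finset.set0 w))) /\
  (\int[P]_w (hs (S w, S2 w) (Zv finset.set0 w))%:E =
   \sum_(p : {set I} * {set I}) P (Ev [set p]%SET) * \int[P]_w (hs p (Zv finset.set0 w))%:E)%E.
Proof.
have eZ : forall Q Q' w p, hs p (Zv Q w) = hs p (Zv Q' w).
  by move=> Q Q' w p; apply: ign => -[k|] // _.
have ih' : forall p Q, P.-integrable setT (EFin \o (fun w => hs p (Zv Q w))).
  move=> p Q; apply: (eq_integrable measurableT _ _ _ (ih p)) => w _ /=.
  by rewrite (eZ finset.set0 Q).
pose g p w := (\1_(Ev [set p]%SET) w * hs p (Zv [set p]%SET w))%:E.
have ig : forall p, P.-integrable setT (g p).
  move=> p; apply: (@le_integrable _ _ _ P setT measurableT _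
     (EFin \o (fun w => hs p (Zv [set p]%SET w)))); last exact: ih'.
  - apply/measurable_EFinP; apply: measurable_funM.
      exact: measurable_indic (Ev_meas _).
    exact: (measurableT_comp (mh p) (mZ _)).
  - move=> w _ /=; rewrite lee_fin normrM indicE.
    by case: (w \in _); rewrite ?normr1 ?normr0 ?mul1r ?mul0r.
have ept : forall w, ((hs (S w, S2 w) (Zv finset.set0 w))%:E = \sum_p g p w)%E.
  move=> w; rewrite (bigD1 (S w, S2 w)) //= big1 ?adde0.
  - by rewrite /g indEv finset.in_set1 eqxx mul1r (eZ finset.set0 [set (S w, S2 w)]%SET).
  - by move=> p hp; rewrite /g indEv finset.in_set1 eq_sym (negbTE hp) mul0r.
split.
  apply: (eq_integrable measurableT (fun w => \sum_p g p w)).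
    by move=> w _ /=; rewrite ept.
  by apply: integrable_sum => // p _; exact: ig.
under eq_integral do rewrite ept.
rewrite integral_sum //.
apply: eq_bigr => p _.
rewrite /g (@cond [set p]%SET (hs p) (mh p) (ign p) (ih' p [set p]%SET)).
congr (_ * _)%E; apply: eq_integral => w _.
by rewrite (eZ [set p]%SET finset.set0).
Qed.


Lemma int_of_sq (x : Omega -> R) : measurable_fun setT x ->
  P.-integrable setT (fun w => (x w ^+ 2)%:E) -> P.-integrable setT (EFin \o x).
Proof.
move=> mx ix.
apply: (@le_integrable _ _ _ P setT measurableT _ (fun w => (1 + x w ^+ 2)%:E)).
- exact/measurable_EFinP.
- move=> w _ /=; rewrite lee_fin (@ger0_norm _ (1 + x w ^+ 2)); last by rewrite addr_ge0 // sqr_ge0.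
  by rewrite ler_norml; apply/andP; split; nra.
- under eq_fun do rewrite EFinD.
  apply: integrableD => //.
  exact: finite_measure_integrable_cst.
Qed.

Section Parts.
Variables (f : (I -> R) -> R) (mf : borel_fun f)
  (f2 : P.-integrable setT (fun w => ((f (vec Y w)) ^+ 2)%:E)).

Let Z0 := Zv finset.set0.
Let a w := f (yv (Z0 w)).
Let mF0 : measurable_fun setT (fun z : V => f (yv z)) :=
  measurableT_comp (borel_mfun mf) myv.
Let ma : measurable_fun setT a := measurableT_comp mF0 (mZ _).
Let it X : P.-integrable setT (fun w => (f (yv (swap X (Z0 w))) ^+ 2)%:E).
Proof.
apply: (@swap_integrable _ X (fun z => (f (yv z) ^+ 2)%:E)) => //.
exact/measurable_EFinP/measurable_funX.
Qed.
Let mt X : measurable_fun setT (fun w => f (yv (swap X (Z0 w)))) :=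
  measurableT_comp mF0 (mswap _ X).

Lemma parts (sel : {set I} * {set I} -> {set I}) :
  let XT w := f (yv (swap (sel (S w, S2 w)) (Z0 w))) in
  [/\ P.-integrable setT (EFin \o XT),
      P.-integrable setT (EFin \o (fun w => a w * XT w)),
      (\int[P]_w (a w * XT w)%:E = \sum_(p : {set I} * {set I})
          P (Ev [set p]%SET) * \int[P]_w (a w * f (yv (swap (sel p) (Z0 w))))%:E)%E
    & (\int[P]_w (XT w)%:E = \int[P]_w (a w)%:E)%E].
Proof.
move=> XT.
have ia : P.-integrable setT (EFin \o a) by exact: int_of_sq.
have ign1 : forall p (z z' : V), (forall k, k != None -> z k = z' k) ->
    f (yv (swap (sel p) z)) = f (yv (swap (sel p) z')).
  move=> p z z' h; congr f; apply/funext => i; rewrite /yv /swap; apply: h => /=.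
  by case: ifP.
have ign0 : forall (z z' : V), (forall k, k != None -> z k = z' k) -> f (yv z) = f (yv z').
  by move=> z z' h; congr f; apply/funext => i; rewrite /yv; apply: h.
have [i1 e1] := @decomp (fun p z => f (yv z) * f (yv (swap (sel p) z)))
  (fun p => measurable_funM mF0 (measurableT_comp mF0 (mswapV _)))
  (fun p z z' h => congr2 *%R (ign0 z z' h) (ign1 p z z' h))
  (fun p => prod_int ma (mt (sel p)) f2 (it (sel p))).
have [i2 e2] := @decomp (fun p z => f (yv (swap (sel p) z)) - f (yv z))
  (fun p => measurable_funB (measurableT_comp mF0 (mswapV _)) mF0)
  (fun p z z' h => congr2 (fun u v => u - v) (ign1 p z z' h) (ign0 z z' h))
  (fun p => integrableB measurableT (int_of_sq (mt (sel p)) (it (sel p))) ia).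
have iX : P.-integrable setT (EFin \o XT).
  apply: (eq_integrable measurableT _ _ _ (integrableD measurableT i2 ia)).
  by move=> w _ /=; rewrite -EFinD subrK.
split => //.
have z0 : (\int[P]_w (XT w - a w)%:E = 0)%E.
  rewrite e2 big1 // => p _.
  rewrite (_ : (\int[P]_w _)%E = 0%E) ?mule0 //.
  rewrite integralB_EFin //; last exact: int_of_sq.
  rewrite (@swap_int _ (sel p) (fun z => (f (yv z))%:E)) ?subee //.
  - exact: integrable_fin_num.
  - exact/measurable_EFinP.
have -> : (\int[P]_w (XT w)%:E = \int[P]_w ((XT w - a w)%:E + (a w)%:E))%E.
  by apply: eq_integral => w _; rewrite -EFinD subrK.
by rewrite (integralD_EFin measurableT i2 ia) z0 add0e.
Qed.

End Parts.

Lemma main_ineq (f : (I -> R) -> R) (mf : borel_fun f)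
  (f2 : P.-integrable setT (fun w => ((f (vec Y w)) ^+ 2)%:E))
  (sub : {ae P, forall w, S w \subset S2 w}) :
  (covariance P (fun w => f (vec Y w)) (fun w => f (resample Y Y' (S2 w) w))
   <= covariance P (fun w => f (vec Y w)) (fun w => f (resample Y Y' (S w) w)))%E.
Proof.
have eS : forall T : Omega -> {set I},
    (fun w => f (resample Y Y' (T w) w)) =
    (fun w => f (yv (swap (T w) (Zv finset.set0 w)))).
  move=> T; apply/funext => w; congr f; apply/funext => i.
  by rewrite /resample /yv /swap /=; case: (i \in T w).
rewrite !eS.
have [iS iaS eS1 mS1] := parts mf f2 fst.
have [iS2 iaS2 eS2 mS2'] := parts mf f2 snd.
have mF0 : measurable_fun setT (fun z : V => f (yv z)) :=
  measurableT_comp (borel_mfun mf) myv.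
have ia : P.-integrable setT (EFin \o (fun w => f (vec Y w))).
  by apply: int_of_sq => //; exact: (measurableT_comp mF0 (mZ finset.set0)).
have eE : forall Z : Omega -> R, expectation P Z = (\int[P]_w (Z w)%:E)%E by move=> Z; rewrite unlock.
rewrite !covarianceE; try (apply/Lfun1_integrable; assumption).
rewrite !eE /=.
rewrite mS1 mS2'.
have le12 : (\int[P]_w (f (vec Y w) * f (yv (swap (S2 w) (Zv finset.set0 w))))%:E <=
             \int[P]_w (f (vec Y w) * f (yv (swap (S w) (Zv finset.set0 w))))%:E)%E.
  rewrite eS1 eS2; apply: lee_sum => p _.
  case: (boolP (p.1 \subset p.2)) => h.
    apply: lee_wpmul2l; first exact: measure_ge0.
    exact: (mono mf h f2).
  suff -> : P (Ev [set p]%SET) = 0%E by rewrite !mul0e.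
  have [N [mN PN sN]] := sub.
  apply/eqP; rewrite eq_le measure_ge0 andbT -PN.
  apply: le_measure; rewrite ?inE; [exact: Ev_meas|exact: mN|].
  move=> w; rewrite /Ev /= finset.in_set1 => /eqP ew; apply: sN => /= hw.
  by move: h; rewrite -ew /= hw.
have f1 := integrable_fin_num measurableT iaS.
have f2' := integrable_fin_num measurableT iaS2.
have f3 := integrable_fin_num measurableT ia.
move: le12.
rewrite -(fineK f1) -(fineK f2') -(fineK f3) lee_fin => le12.
by rewrite -EFinM -!EFinB lee_fin lerB.
Qed.

End Main.

Unset Implicit Arguments.

Theorem lemma6p1 (d : measure_display) (Omega : measurableType d)
  (R : realType) (P : probability Omega R) (I : finType)
  (Y Y' : I -> Omega -> R) (S S2 : Omega -> {set I}) (f : (I -> R) -> R)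
  (mY : forall i, measurable_fun setT (Y i))
  (mY' : forall i, measurable_fun setT (Y' i))
  (mS : forall A : {set I}, measurable (S @^-1` [set A]))
  (mS2 : forall A : {set I}, measurable (S2 @^-1` [set A]))
  (indep : mutual_indep P (lemma6p1_events Y Y' S S2))
  (same_law : forall (i j : I) (B : set R), measurable B ->
     P (Y i @^-1` B) = P (Y j @^-1` B) /\ P (Y' i @^-1` B) = P (Y j @^-1` B))
  (mf : borel_fun f)
  (f2 : P.-integrable setT (fun w => ((f (vec Y w)) ^+ 2)%:E))
  (sub : {ae P, forall w, S w \subset S2 w}) :
  (covariance P (fun w => f (vec Y w)) (fun w => f (resample Y Y' (S2 w) w))
   <= covariance P (fun w => f (vec Y w)) (fun w => f (resample Y Y' (S w) w)))%E.
Proof.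
by apply: main_ineq.
Qed.
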